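(* Let $K$ be a semifield and $P$ a polygon. Let $d_1,\dots,d_m$ be pairwise non-crossing internal diagonals of $P$ dividing $P$ into subpolygons $P_1,\dots,P_{m+1}$, let $D_i$ be a dissection of $P_i$, and set $D = \{d_1,\dots,d_m\} \cup D_1 \cup \dots \cup D_{m+1}$ (a dissection of $P$). Let $f_i : \operatorname{diag}(P_i) \to K$ be a weak frieze with respect to $D_i$ for each $i$, such that $f_i(d) = f_j(d)$ whenever $P_i$ and $P_j$ share a diagonal $d$, and let $f : \operatorname{diag}(P) \to K$ be the unique weak frieze with respect to $D$ with $f|_{\operatorname{diag}(P_i)} = f_i$ for all $i$. Then $f$ is a frieze if and only if each $f_i$ is a frieze.
   Context: A semifield is a set $K$ with binary operations $+$ and $\cdot$ such that $+$ is associative and commutative, $(K,\cdot)$ is a commutative group, and $\cdot$ distributes over $+$; no subtraction is assumed. A polygon is a finite set $V$ of at least three vertices with a cyclic order. A diagonal is a two-element subset of $V$ (edges $\{\alpha,\alpha^+\}$ count as diagonals); $\operatorname{diag}(P)$ is the set of diagonals; non-edges are internal. $\{\alpha,\beta\}$ and $\{\gamma,\delta\}$ cross if $\alpha,\beta,\gamma,\delta$ are four distinct vertices appearing in the cyclic order as $\alpha,\gamma,\beta,\delta$ or $\alpha,\delta,\beta,\gamma$. A subpolygon is a subset of $V$ of at least three vertices with the induced cyclic order. A dissection is a (possibly empty) set of pairwise non-crossing internal diagonals. Write $f(\alpha,\beta):=f(\{\alpha,\beta\})$. A map $f$ on the diagonals of a polygon with values in $K$ is a frieze if it satisfies the Ptolemy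 relation $f(\alpha,\beta)f(\gamma,\delta) = f(\alpha,\gamma)f(\beta,\delta) + f(\alpha,\delta)f(\beta,\gamma)$ for all crossing diagonals $\{\alpha,\beta\}$, $\{\gamma,\delta\}$; it is a weak frieze with respect to a dissection $D$ if the Ptolemy relation holds whenever $\{\alpha,\beta\}$, $\{\gamma,\delta\}$ cross and $\{\gamma,\delta\}\in D$. (Existence and uniqueness of $f$ is known.) *)

(* Defs.v *)
From mathcomp Require Import all_boot.
Set Warnings "-notation-overridden".
Set Implicit Arguments. Unset Strict Implicit. Unset Printing Implicit Defensive.

Record semifield := Semifield {
  sf_car :> Type;
  sf_add : sf_car -> sf_car -> sf_car;
  sf_mul : sf_car -> sf_car -> sf_car;
  sf_one : sf_car;
  sf_inv : sf_car -> sf_car;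
  sf_addA : forall x y z, sf_add x (sf_add y z) = sf_add (sf_add x y) z;
  sf_addC : forall x y, sf_add x y = sf_add y x;
  sf_mulA : forall x y z, sf_mul x (sf_mul y z) = sf_mul (sf_mul x y) z;
  sf_mulC : forall x y, sf_mul x y = sf_mul y x;
  sf_mul1 : forall x, sf_mul sf_one x = x;
  sf_mulV : forall x, sf_mul (sf_inv x) x = sf_one;
  sf_mulDr : forall x y z, sf_mul x (sf_add y z) = sf_add (sf_mul x y) (sf_mul x z)
}.

(* Polygon P: vertex set 'I_n (n >= 3) with the natural cyclic order
   0 -> 1 -> ... -> n-1 -> 0. *)
Section Poly.
Variable n : nat.
Local Notation V := 'I_n.

Definition cyc3 (x y z : V) : bool :=
  [|| (x < y < z)%N, (y < z < x)%N | (z < x < y)%N].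

Definition crossb (a b c d : V) : bool :=
  (cyc3 a c b && cyc3 a b d) || (cyc3 a d b && cyc3 a b c).

Definition is_diag (S d : {set V}) : Prop := d \subset S /\ #|d| = 2.

Definition is_edge (S d : {set V}) : Prop :=
  exists x y, [/\ x \in S, y \in S, x != y, d = [set x; y] &
     forall z, z \in S -> ~~ cyc3 x z y].

Definition is_internal (S d : {set V}) : Prop := is_diag S d /\ ~ is_edge S d.

Definition diag_cross (d1 d2 : {set V}) : Prop :=
  exists a b c d, [/\ d1 = [set a; b], d2 = [set c; d] & crossb a b c d].

Definition is_subpolygon (S : {set V}) : Prop := (3 <= #|S|)%N.

Definition dissection (S : {set V}) (D : {set {set V}}) : Prop :=
  (forall d, d \in D -> is_internal S d) /\
  (forall d1 d2, d1 \in D -> d2 \in D -> ~ diag_cross d1 d2).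

(* a map on diag(S) is modelled by f : {set V} -> K, only its values on
   diagonals of S matter *)
Definition ptolemy (K : semifield) (f : {set V} -> K) (a b c d : V) : Prop :=
  sf_mul (f [set a; b]) (f [set c; d]) =
  sf_add (sf_mul (f [set a; c]) (f [set b; d]))
         (sf_mul (f [set a; d]) (f [set b; c])).

Definition frieze (K : semifield) (S : {set V}) (f : {set V} -> K) : Prop :=
  forall a b c d, a \in S -> b \in S -> c \in S -> d \in S ->
    crossb a b c d -> ptolemy f a b c d.

Definition weak_frieze (K : semifield) (S : {set V}) (D : {set {set V}})
    (f : {set V} -> K) : Prop :=
  forall a b c d, a \in S -> b \in S -> c \in S -> d \in S ->
    crossb a b c d -> [set c; d] \in D -> ptolemy f a b c d.

(* the subpolygons cut out by a dissection E of P: subpolygons all of whose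
   edges are edges of P or diagonals in E, and which contain no diagonal of E
   as an internal diagonal *)
Definition is_cell (E : {set {set V}}) (C : {set V}) : Prop :=
  [/\ is_subpolygon C,
      (forall d, is_edge C d -> is_edge setT d \/ d \in E) &
      (forall e, e \in E -> ~ is_internal C e)].

End Poly.

(* Main.v *)
Require Import Defs.
From mathcomp Require Import all_boot zify.
From Stdlib Require Import Ring.
Set Implicit Arguments. Unset Strict Implicit. Unset Printing Implicit Defensive.

Section Alg.
Variable K : semifield.
Local Notation K0 := (option (sf_car K)).
Definition add0 (x y : K0) : K0 := match x, y with None, _ => y | _, None => x | Some a, Some b => Some (sf_add a b) end.
Definition mul0 (x y : K0) : K0 := match x, y with Some a, Some b => Some (sf_mul a b) | _, _ => None end.
Lemma K0_srt : semi_ring_theory None (Some (sf_one K)) add0 mul0 (@eq K0).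
Proof.
constructor.
- by case.
- by case=> [a|] [b|] //=; rewrite sf_addC.
- by case=> [a|] [b|] [c|] //=; rewrite sf_addA.
- by case=> [a|] //=; rewrite sf_mul1.
- by [].
- by case=> [a|] [b|] //=; rewrite sf_mulC.
- by case=> [a|] [b|] [c|] //=; rewrite sf_mulA.
- case=> [a|] [b|] [c|] //=; rewrite sf_mulC sf_mulDr; congr (Some (sf_add _ _)); apply: sf_mulC.
Qed.
Add Ring K0r : K0_srt.
Local Infix "+" := add0.
Local Infix "*" := mul0.

Lemma sf_cancel (a x y : K) : sf_mul a x = sf_mul a y -> x = y.
Proof.
move=> h. rewrite -(sf_mul1 x) -(sf_mul1 y) -(sf_mulV a) -!sf_mulA h //.
Qed.

Lemma core_alg (x12 x13 x14 x15 x23 x24 x25 x34 x35 x45 : K) :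
  sf_mul x13 x24 = sf_add (sf_mul x12 x34) (sf_mul x14 x23) ->
  sf_mul x35 x14 = sf_add (sf_mul x34 x15) (sf_mul x13 x45) ->
  sf_mul x14 x25 = sf_add (sf_mul x45 x12) (sf_mul x24 x15) ->
  sf_mul x24 x35 = sf_add (sf_mul x23 x45) (sf_mul x25 x34).
Proof.
move=> E1 E3 E4.
apply: (@sf_cancel (sf_mul x13 x14)).
have L : forall u v : K, Some u = Some v -> u = v by move=> u v [].
apply: L.
have E1' : Some x13 * Some x24 = Some x12 * Some x34 + Some x14 * Some x23 by rewrite /= E1.
have E3' : Some x35 * Some x14 = Some x34 * Some x15 + Some x13 * Some x45 by rewrite /= E3.
have E4' : Some x14 * Some x25 = Some x45 * Some x12 + Some x24 * Some x15 by rewrite /= E4.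
set X12 := Some x12 in E1' E3' E4' *. set X13 := Some x13 in E1' E3' E4' *.
set X14 := Some x14 in E1' E3' E4' *. set X15 := Some x15 in E1' E3' E4' *.
set X23 := Some x23 in E1' E3' E4' *. set X24 := Some x24 in E1' E3' E4' *.
set X25 := Some x25 in E1' E3' E4' *. set X34 := Some x34 in E1' E3' E4' *.
set X35 := Some x35 in E1' E3' E4' *. set X45 := Some x45 in E1' E3' E4' *.
change ((X13 * X14) * (X24 * X35) = (X13 * X14) * (X23 * X45 + X25 * X34)).
transitivity ((X13 * X24) * (X35 * X14)); first by ring.
rewrite E1' E3'.
transitivity ((X34 * X15) * (X12 * X34 + X14 * X23) + X12 * X34 * X13 * X45 + X14 * X23 * X13 * X45); first by ring.
rewrite -E1'.
transitivity (X13 * X14 * X23 * X45 + X13 * X34 * (X45 * X12 + X24 * X15)); first by ring.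
rewrite -E4'. ring.
Qed.
End Alg.

Section Geo.
Variable K : semifield.
Variable n : nat.
Local Notation V := 'I_n.
Implicit Types (f : {set V} -> K) (a b c d p q r s : V).

Lemma s2C a b : [set a; b] = [set b; a].
Proof. exact: setUC. Qed.

Lemma ptA f a b c d : ptolemy f a b c d -> ptolemy f b a c d.
Proof.
rewrite /ptolemy (s2C b a) => ->; rewrite sf_addC; congr sf_add; apply: sf_mulC.
Qed.

Lemma ptB f a b c d : ptolemy f a b c d -> ptolemy f a b d c.
Proof.
rewrite /ptolemy (s2C d c) => ->; rewrite sf_addC; congr sf_add; apply: sf_mulC.
Qed.

Lemma ptC f a b c d : ptolemy f a b c d -> ptolemy f c d a b.
Proof.
rewrite /ptolemy sf_mulC => ->; rewrite (s2C c a) (s2C d b) (s2C c b) (s2C d a).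
congr sf_add; apply: sf_mulC.
Qed.

Lemma core f v1 v2 v3 v4 v5 :
  ptolemy f v1 v3 v2 v4 -> ptolemy f v3 v5 v4 v1 -> ptolemy f v4 v1 v5 v2 ->
  ptolemy f v2 v4 v3 v5.
Proof.
rewrite /ptolemy (s2C v3 v2) (s2C v4 v1) (s2C v5 v1) (s2C v3 v1) (s2C v5 v4)
  (s2C v5 v2) (s2C v4 v2) (s2C v4 v3).
exact: core_alg.
Qed.

Lemma lemN f a b c d q :
  ptolemy f q b c d -> ptolemy f q d b a -> ptolemy f q d a c -> ptolemy f a b c d.
Proof.
move=> E2 H4 H5.
have E4 : ptolemy f b a d q by apply: ptB; apply: ptC.
have E5 : ptolemy f d q a c by apply: ptA.
apply: ptA; apply: ptC; exact: (core E2 E4 E5).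
Qed.


Definition side (p q : V) : {set V} := [set v : V | [|| (v:nat) == p, (v:nat) == q | cyc3 p v q]].

Ltac geo := unfold side, crossb, cyc3 in *; lia.

Lemma ord_eq (x y : V) : (x : nat) = y -> x = y.
Proof. exact: val_inj. Qed.

Lemma M1 f (S : {set V}) r s : frieze (S :&: side r s) f -> frieze (S :&: side s r) f ->
  (forall a b, a \in S -> b \in S -> crossb a b r s -> ptolemy f a b r s) ->
  r \in S -> s \in S -> (r : nat) != s ->
  forall b c d, b \in S -> c \in S -> d \in S -> crossb r b c d -> ptolemy f r b c d.
Proof.
move=> HA HB He rS sS rs.
have key: forall b c d, b \in S -> c \in S -> d \in S -> cyc3 r c b -> cyc3 r b d ->
    ptolemy f r b c d.
  move=> b c d bS cS dS h1 h2.
  have: (s:nat) = b \/ (s:nat) = c \/ (s:nat) = d \/ cyc3 r s c \/ cyc3 c s b \/ cyc3 b s d \/ cyc3 d s r.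
    clear -h1 h2 rs; geo.
  case=> [/ord_eq E|[/ord_eq E|[/ord_eq E|[h|[h|[h|h]]]]]].
  - subst s. apply: ptC. apply: He => //; clear -h1 h2; geo.
  - subst s. apply: HB; rewrite ?inE ?rS ?bS ?cS ?dS /=; clear -h1 h2; geo.
  - subst s. apply: HA; rewrite ?inE ?rS ?bS ?cS ?dS /=; clear -h1 h2; geo.
  - apply: HB; rewrite ?inE ?rS ?bS ?cS ?dS /=; clear -h1 h2 h; geo.
  - (* pentagon r c s b d *)
    have E1 : ptolemy f r s c b by apply: ptC; apply: He => //; clear -h1 h2 h; geo.
    have E5 : ptolemy f d c r s by apply: He => //; clear -h1 h2 h; geo.
    have E3 : ptolemy f s d b r by apply: HB; rewrite ?inE ?rS ?sS ?bS ?cS ?dS /=; clear -h1 h2 h; geo.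
    have E4 : ptolemy f b r d c by exact: (core E3 E5 E1).
    by apply: ptB; apply: ptA.
  - (* pentagon r c b s d *)
    have E4 : ptolemy f s r d c by apply: ptA; apply: ptC; apply: He => //; clear -h1 h2 h; geo.
    have E3 : ptolemy f b d s r by apply: ptB; apply: He => //; clear -h1 h2 h; geo.
    have E1 : ptolemy f r b c s by apply: HA; rewrite ?inE ?rS ?sS ?bS ?cS ?dS /=; clear -h1 h2 h; geo.
    have E2 : ptolemy f c s b d by exact: (core E1 E3 E4).
    have E5 : ptolemy f d c r b by exact: (core E4 E1 E2).
    by apply: ptB; apply: ptC.
  - apply: HA; rewrite ?inE ?rS ?bS ?cS ?dS /=; clear -h1 h2 h; geo.
move=> b c d bS cS dS.
rewrite /crossb => /orP [/andP [h1 h2]|/andP [h1 h2]]; first exact: key.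
by apply: ptB; apply: key.
Qed.

Lemma cA a b c d : crossb a b c d -> crossb b a c d.
Proof. geo. Qed.
Lemma cB a b c d : crossb a b c d -> crossb a b d c.
Proof. geo. Qed.
Lemma cC a b c d : crossb a b c d -> crossb c d a b.
Proof. geo. Qed.

Lemma lemM f (S : {set V}) p q : p \in S -> q \in S -> (p : nat) != q ->
  frieze (S :&: side p q) f -> frieze (S :&: side q p) f ->
  (forall a b, a \in S -> b \in S -> crossb a b p q -> ptolemy f a b p q) ->
  frieze S f.
Proof.
move=> pS qS pq HA HB He.
have Hp := M1 HA HB He pS qS pq.
have He' : forall a b, a \in S -> b \in S -> crossb a b q p -> ptolemy f a b q p.
  by move=> a b aS bS h; apply: ptB; apply: He => //; apply: cB.
have qp : (q : nat) != p by rewrite eq_sym.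
have Hq := M1 HB HA He' qS pS qp.
have root : forall r, (forall b c d, b \in S -> c \in S -> d \in S -> crossb r b c d -> ptolemy f r b c d) ->
   forall a b c d, a \in S -> b \in S -> c \in S -> d \in S -> crossb a b c d ->
   [|| (r:nat) == a, (r:nat) == b, (r:nat) == c | (r:nat) == d] -> ptolemy f a b c d.
  move=> r Hr a b c d aS bS cS dS X /or4P [/eqP/ord_eq E|/eqP/ord_eq E|/eqP/ord_eq E|/eqP/ord_eq E]; subst r.
  - by apply: Hr.
  - by apply: ptA; apply: Hr => //; apply: cA.
  - by apply: ptC; apply: Hr => //; apply: cC.
  - by apply: ptC; apply: ptA; apply: Hr => //; apply: cA; apply: cC.
have key : forall a b c d, a \in S -> b \in S -> c \in S -> d \in S -> cyc3 a c b -> cyc3 a b d ->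
    ~~ [|| (q:nat) == a, (q:nat) == b, (q:nat) == c | (q:nat) == d] -> ptolemy f a b c d.
  move=> a b c d aS bS cS dS h1 h2 hq.
  have : cyc3 a q c \/ cyc3 c q b \/ cyc3 b q d \/ cyc3 d q a by clear -h1 h2 hq; geo.
  case=> [h|[h|[h|h]]].
  - apply: (@lemN _ a b c d q); apply: Hq => //; clear -h1 h2 h; geo.
  - apply: ptA; apply: ptC; apply: (@lemN _ c d b a q); apply: Hq => //; clear -h1 h2 h; geo.
  - apply: ptB; apply: ptA; apply: (@lemN _ b a d c q); apply: Hq => //; clear -h1 h2 h; geo.
  - apply: ptB; apply: ptC; apply: (@lemN _ d c a b q); apply: Hq => //; clear -h1 h2 h; geo.
move=> a b c d aS bS cS dS X.
have [hp|hp] := boolP [|| (p:nat) == a, (p:nat) == b, (p:nat) == c | (p:nat) == d].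
  exact: (root p Hp).
have [hq|hq] := boolP [|| (q:nat) == a, (q:nat) == b, (q:nat) == c | (q:nat) == d].
  exact: (root q Hq).
move: (X); rewrite /crossb => /orP [/andP [h1 h2]|/andP [h1 h2]].
  exact: key.
apply: ptB; apply: key => //.
by move: hq; rewrite !negb_or => /and4P [-> -> -> ->].
Qed.

End Geo.

Section Geo2.
Variable n : nat.
Local Notation V := 'I_n.
Implicit Types (a b c d p q r s t u v w y z : V).
Ltac geo := unfold side, crossb, cyc3 in *; lia.

Lemma cdist a b c d : crossb a b c d ->
  [&& (a:nat) != b, (a:nat) != c, (a:nat) != d, (b:nat) != c, (b:nat) != d & (c:nat) != d].
Proof. geo. Qed.
Lemma ysel p q u v : crossb p q u v -> cyc3 q v p || cyc3 q u p.
Proof. geo. Qed.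
Lemma core6 p q s t y z : cyc3 p z q -> cyc3 q y p -> cyc3 s p t -> cyc3 t z s -> ~~ crossb p q s t -> cyc3 s y t.
Proof. geo. Qed.
Lemma core6q p q s t y z : cyc3 p z q -> cyc3 q y p -> cyc3 s q t -> cyc3 t z s -> ~~ crossb p q s t -> cyc3 s y t.
Proof. geo. Qed.
Lemma finc s t y z : cyc3 s y t -> cyc3 t z s -> crossb s t y z.
Proof. geo. Qed.
Lemma cyc3r x y z : cyc3 x y z = cyc3 y z x.
Proof. rewrite /cyc3; apply/idP/idP; lia. Qed.
Lemma sidez p q z : [|| (z:nat) == p, (z:nat) == q | cyc3 p z q] -> (z:nat) != p -> (z:nat) != q -> cyc3 p z q.
Proof. lia. Qed.

Lemma GS2 p q s t w z : crossb s t w z ->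
  [|| (w:nat) == p, (w:nat) == q | cyc3 p w q] -> [|| (z:nat) == p, (z:nat) == q | cyc3 p z q] ->
  (s:nat) = p \/ (s:nat) = q -> (t:nat) = p \/ (t:nat) = q -> False.
Proof. unfold crossb, cyc3. time lia. Qed.

Lemma GS1p p q u v s t z : crossb p q u v -> ~~ crossb p q s t -> crossb s t p z ->
  [|| (z:nat) == p, (z:nat) == q | cyc3 p z q] ->
  ((z:nat) != p) && ((z:nat) != q) && (crossb s t u z || crossb s t v z).
Proof.
move=> X NC Y hz.
have /and4P [_ _ _ /and3P [_ _ zp]] := cdist Y.
have zq : (z:nat) != q.
  apply/negP => /eqP /ord_eq E; subst z. by move/negP: NC; apply; apply: cC.
rewrite eq_sym zp zq /=.
have hz' : cyc3 p z q by apply: sidez => //; rewrite eq_sym.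
have NC' : ~~ crossb p q t s by apply/negP => /cB; apply/negP.
have Hy : forall y, cyc3 q y p -> crossb s t y z.
  move=> y hy. move: Y; rewrite /crossb => /orP [/andP [h1 h2]|/andP [h1 h2]].
    rewrite cyc3r in h2. apply: finc => //. exact: (core6 hz' hy h1 h2 NC).
  rewrite cyc3r in h2. apply: cA; apply: finc; last exact: h1.
  exact: (core6 hz' hy h2 h1 NC').
by case/orP: (ysel X) => /Hy ->; rewrite ?orbT.
Qed.

Lemma GS1q p q u v s t z : crossb p q u v -> ~~ crossb p q s t -> crossb s t q z ->
  [|| (z:nat) == p, (z:nat) == q | cyc3 p z q] ->
  ((z:nat) != p) && ((z:nat) != q) && (crossb s t u z || crossb s t v z).
Proof.
move=> X NC Y hz.
have /and4P [_ _ _ /and3P [_ _ zq]] := cdist Y.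
have zp : (z:nat) != p.
  apply/negP => /eqP /ord_eq E; subst z. by move/negP: NC; apply; apply: cC; apply: cB.
rewrite zp eq_sym zq /=.
have hz' : cyc3 p z q by apply: sidez => //; rewrite eq_sym.
have NC' : ~~ crossb p q t s by apply/negP => /cB; apply/negP.
have Hy : forall y, cyc3 q y p -> crossb s t y z.
  move=> y hy. move: Y; rewrite /crossb => /orP [/andP [h1 h2]|/andP [h1 h2]].
    rewrite cyc3r in h2. apply: finc => //. exact: (core6q hz' hy h1 h2 NC).
  rewrite cyc3r in h2. apply: cA; apply: finc; last exact: h1.
  exact: (core6q hz' hy h2 h1 NC').
by case/orP: (ysel X) => /Hy ->; rewrite ?orbT.
Qed.

Lemma GS1 p q u v s t w z : crossb p q u v -> ~~ crossb p q s t -> crossb s t w z ->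
  [|| (z:nat) == p, (z:nat) == q | cyc3 p z q] -> ((w:nat) == p) || ((w:nat) == q) ->
  ((z:nat) != p) && ((z:nat) != q) && (crossb s t u z || crossb s t v z).
Proof.
move=> X NC Y hz /orP [/eqP/ord_eq E|/eqP/ord_eq E]; subst w; [exact: GS1p X NC Y hz | exact: GS1q X NC Y hz].
Qed.

Lemma eq_ordE (x y : V) : (x == y) = ((x:nat) == y).
Proof. by []. Qed.

Definition cr (e : {set V}) (u v : V) : bool :=
  [exists st : V * V, (e == [set st.1; st.2]) && crossb st.1 st.2 u v].
Definition sepS (E : {set {set V}}) (S : {set V}) : {set {set V}} :=
  [set e in E | [exists u in S, exists v in S, cr e u v]].

Lemma sepS_in (E : {set {set V}}) (S : {set V}) e u v s t : e \in E -> u \in S -> v \in S -> e = [set s; t] -> crossb s t u v ->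
  e \in sepS E S.
Proof.
move=> eE uS vS ee X. rewrite inE eE /=.
apply/existsP; exists u; rewrite uS; apply/existsP; exists v; rewrite vS.
by apply/existsP; exists (s, t); rewrite ee eqxx.
Qed.

Lemma sep_proper (E : {set {set V}}) (S : {set V}) p q u v : dissection setT E -> [set p; q] \in E ->
  u \in S -> v \in S -> crossb p q u v ->
  sepS E ((S :|: [set p; q]) :&: side p q) \proper sepS E S.
Proof.
move=> [_ HE] pqE uS vS X.
rewrite properE; apply/andP; split.
  apply/subsetP => e' e'in; case/setIdP: e'in => e'E.
  move=> /existsP [u' /andP [u'S1 /existsP [v' /andP [v'S1 /existsP [[s t] /andP [/eqP ee' X']]]]]].
  move: ee' X'; rewrite /= => ee' X'.
  have NC : ~~ crossb p q s t.
    apply/negP => C; apply: (HE _ _ pqE e'E); exists p, q, s, t; split => //.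
  rewrite !inE in u'S1 v'S1; case/andP: u'S1 => u'S1 u'side; case/andP: v'S1 => v'S1 v'side.
  have [u'S|u'S] := boolP (u' \in S).
    have [v'S|v'S] := boolP (v' \in S).
      exact: (sepS_in e'E u'S v'S ee' X').
    move: v'S1; rewrite (negbTE v'S) /= => v'pq.
    case/andP: (GS1 X NC (cB X') u'side v'pq) => _ /orP [] C.
      exact: (sepS_in e'E u'S uS ee' (cB C)).
    exact: (sepS_in e'E u'S vS ee' (cB C)).
  move: u'S1; rewrite (negbTE u'S) /= => u'pq.
  case/andP: (GS1 X NC X' v'side u'pq) => /andP [v'p v'q] /orP [] C.
    have v'S : v' \in S by move: v'S1; rewrite !eq_ordE (negbTE v'p) (negbTE v'q) !orbF.
    exact: (sepS_in e'E uS v'S ee' C).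
  have v'S : v' \in S by move: v'S1; rewrite !eq_ordE (negbTE v'p) (negbTE v'q) !orbF.
  exact: (sepS_in e'E vS v'S ee' C).
apply/subsetPn; exists [set p; q].
  exact: (sepS_in pqE uS vS (erefl _) X).
rewrite !inE pqE /=; apply/negP => /existsP [u' /andP [u'S1 /existsP [v' /andP [v'S1 /existsP [[s t] /andP [/eqP ee' X']]]]]].
move: ee' X'; rewrite /= => ee' X'.
move: u'S1 v'S1; rewrite !inE !eq_ordE /= => /andP [_ u'side] /andP [_ v'side].
have : s \in [set p; q] by rewrite ee' !inE eqxx.
have : t \in [set p; q] by rewrite ee' !inE eqxx orbT.
rewrite !inE !eq_ordE /= => /orP ht /orP hs.
apply: (GS2 X' u'side v'side).
  by case: hs => /eqP; auto.
by case: ht => /eqP; auto.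
Qed.

End Geo2.

Section Ind.
Variable K : semifield.
Variable n : nat.
Local Notation V := 'I_n.

Lemma main_ind (f : {set V} -> K) (E D : {set {set V}}) : dissection setT E -> (forall e, e \in E -> e \in D) ->
  weak_frieze setT D f ->
  (forall S, sepS E S = set0 -> frieze S f) -> forall S, frieze S f.
Proof.
move=> HE HED Hw Hb.
suff H: forall k S, #|sepS E S| <= k -> frieze S f by move=> S; exact: (H _ S (leqnn _)).
elim=> [|k IH] S hk.
  by apply: Hb; apply/eqP; rewrite -cards_eq0 -leqn0.
case: (set_0Vmem (sepS E S)) => [H0|[e eS]]; first exact: Hb.
move: (eS); rewrite inE => /andP [eE /existsP [u /andP [uS /existsP [v /andP [vS /existsP [[p q] /andP [/eqP ee X]]]]]]].
simpl in ee, X. subst e.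
set S' := S :|: [set p; q].
have HS' : frieze S' f.
  apply: (@lemM K n f S' p q).
  - by rewrite !inE eqxx !orbT.
  - by rewrite !inE eqxx !orbT.
  - by have /and4P [] := cdist X.
  - apply: IH. have := proper_card (sep_proper HE eE uS vS X). rewrite -/S'. move: hk. lia.
  - apply: IH.
    have eE' : [set q; p] \in E by rewrite s2C.
    have := proper_card (sep_proper HE eE' uS vS (cA X)).
    rewrite (s2C q p) -/S'. move: hk. lia.
  - move=> a b aS bS Y. apply: Hw => //; rewrite ?inE //. exact: HED.
move=> a b c d aS bS cS dS; apply: HS'; by rewrite inE ?aS ?bS ?cS ?dS.
Qed.
End Ind.

Section Cell.
Variable n : nat.
Local Notation V := 'I_n.
Implicit Types (a b c d p q r s t u v w x y z : V).
Definition pos x z : nat := if (x <= z)%N then z - x else z + n - x.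
Arguments pos : simpl never.
Lemma pos_spec x z : (z < n)%N /\ (((x <= z)%N /\ pos x z = z - x) \/ ((z < x)%N /\ pos x z = z + n - x)).
Proof. rewrite /pos; split; first exact: ltn_ord. case: leqP; lia. Qed.
Definition cyc3n (x y z : nat) : bool := [|| (x < y < z)%N, (y < z < x)%N | (z < x < y)%N].
Lemma cyc3_pos x a b c : cyc3 a b c = cyc3n (pos x a) (pos x b) (pos x c).
Proof.
have := pos_spec x a. have := pos_spec x b. have := pos_spec x c.
have := ltn_ord x. rewrite /cyc3n /cyc3 => X [? [[? ->]|[? ->]]] [? [[? ->]|[? ->]]] [? [[? ->]|[? ->]]]; apply/idP/idP => H; lia.
Qed.
Lemma eq_pos x a b : ((a:nat) == b) = (pos x a == pos x b).
Proof. have := ltn_ord x. have := pos_spec x a. have := pos_spec x b. move=> X A B; apply/idP/idP => H; lia. Qed.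
Lemma pos_x x : pos x x = 0.
Proof. by rewrite /pos leqnn subnn. Qed.

Ltac posify x := rewrite /crossb ?(cyc3_pos x) ?(eq_pos x) ?pos_x /cyc3n ?ltn0 ?andbF ?andFb ?orbF ?orFb.

Lemma L1 s t w x : cyc3 t w s -> ~~ crossb s t x w -> ~~ cyc3 s x t.
Proof. unfold crossb, cyc3; lia. Qed.

Lemma L2 x y s t v : cyc3 x v y -> cyc3 s v t -> ~~ cyc3 s x t -> ~~ cyc3 s y t ->
  (pos x s < pos x v < pos x t)%N && (pos x t <= pos x y)%N.
Proof. posify x. lia. Qed.

Lemma NCP x s t s' t' : (pos x s' < pos x s < pos x t')%N -> (pos x s < pos x t)%N -> ~~ crossb s t s' t' -> (pos x t <= pos x t')%N.
Proof. posify x. lia. Qed.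

Lemma NCP2 x s t s' t' : (pos x s' < pos x t < pos x t')%N -> (pos x s < pos x t)%N -> ~~ crossb s t s' t' -> (pos x s' <= pos x s)%N.
Proof. posify x. lia. Qed.

Lemma L3 x y s : (0 < pos x s)%N -> (pos x s < pos x y)%N -> cyc3 x s y.
Proof. posify x. lia. Qed.

Lemma pos_inj x s y : pos x s = pos x y -> s = y.
Proof. move=> h; apply: ord_eq; apply/eqP; rewrite (eq_pos x) h. done. Qed.

Lemma GW s t z z' w : crossb s t z z' -> ~~ crossb s t z w -> ~~ crossb s t z' w -> ((w:nat) == s) || ((w:nat) == t).
Proof. posify s. lia. Qed.

Lemma cyc3_cross s t z z' : cyc3 s z t -> cyc3 t z' s -> crossb s t z z'.
Proof. unfold crossb, cyc3; lia. Qed.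

Lemma GG x y s t v w : crossb s t v w -> ~~ crossb s t x w -> ~~ crossb s t y w -> cyc3 x v y ->
  (pos x s < pos x v < pos x t)%N && (pos x t <= pos x y)%N || (pos x t < pos x v < pos x s)%N && (pos x s <= pos x y)%N.
Proof.
move=> Y h1 h2 hv.
move: (Y); rewrite /crossb => /orP [/andP [c1 c2]|/andP [c1 c2]].
  rewrite cyc3r in c2.
  by rewrite (L2 hv c1 (L1 c2 h1) (L1 c2 h2)).
rewrite cyc3r in c2.
have h1' : ~~ crossb t s x w by apply/negP => /cA; apply/negP.
have h2' : ~~ crossb t s y w by apply/negP => /cA; apply/negP.
by rewrite (L2 hv c2 (L1 c1 h1') (L1 c1 h2')) orbT.
Qed.

Lemma cell_exists (E : {set {set V}}) (S : {set V}) a b c d : dissection setT E -> sepS E S = set0 ->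
  a \in S -> b \in S -> c \in S -> d \in S -> crossb a b c d ->
  exists2 C, is_cell E C & [&& a \in C, b \in C, c \in C & d \in C].
Proof.
move=> [HEi HE] H0 aS bS cS dS X.
pose W := [set a; b; c; d].
have WS : forall w, w \in W -> w \in S.
  by move=> w; rewrite /W !inE => /orP [/orP [/orP [] |] |] /eqP ->.
have hW : forall e w w', e \in E -> w \in W -> w' \in W -> ~~ cr e w w'.
  move=> e w w' eE wW w'W; apply/negP => Ce.
  have : e \in sepS E S.
    rewrite inE eE /=; apply/existsP; exists w; rewrite WS //; apply/existsP; exists w'; rewrite WS //.
  by rewrite H0 inE.
set C := [set z : V | [forall w in W, [forall e in E, ~~ cr e z w]]].
have Csep : forall z e s t w, z \in C -> e \in E -> e = [set s; t] -> w \in W -> ~~ crossb s t z w.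
  move=> z e s t w zC eE es wW.
  move: zC; rewrite inE => /forallP/(_ w)/implyP/(_ wW)/forallP/(_ e)/implyP/(_ eE)/negP N.
  apply/negP => Y; apply: N; apply/existsP; exists (s, t); by rewrite es eqxx.
have Cnot : forall z, z \notin C -> exists w e s t, [/\ w \in W, e \in E, e = [set s; t] & crossb s t z w].
  move=> z; rewrite inE negb_forall => /existsP [w]; rewrite negb_imply => /andP [wW].
  rewrite negb_forall => /existsP [e]; rewrite negb_imply negbK => /andP [eE /existsP [[s t] /andP [/eqP es Y]]].
  by exists w, e, s, t.
have WC : forall w, w \in W -> w \in C.
  move=> w wW; rewrite inE; apply/forallP => w'; apply/implyP => w'W; apply/forallP => e; apply/implyP => eE.
  exact: hW.
have Cgood : forall z z' e s t, z \in C -> z' \in C -> e \in E -> e = [set s; t] -> ~~ crossb s t z z'.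
  move=> z z' e s t zC z'C eE es; apply/negP => Y.
  have key : forall w, w \in W -> ((w:nat) == s) || ((w:nat) == t).
    move=> w wW; exact: (GW Y (Csep z e s t w zC eE es wW) (Csep z' e s t w z'C eE es wW)).
  have Ha : ((a:nat) == s) || ((a:nat) == t) by apply: key; rewrite /W !inE eqxx ?orbT.
  have Hb : ((b:nat) == s) || ((b:nat) == t) by apply: key; rewrite /W !inE eqxx ?orbT.
  have Hc : ((c:nat) == s) || ((c:nat) == t) by apply: key; rewrite /W !inE eqxx ?orbT.
  have := cdist X. move: Ha Hb Hc. clear. lia.
have aC : a \in C by apply: WC; rewrite /W !inE eqxx.
have bC : b \in C by apply: WC; rewrite /W !inE eqxx ?orbT.
have cC : c \in C by apply: WC; rewrite /W !inE eqxx ?orbT.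
have dC : d \in C by apply: WC; rewrite /W !inE eqxx ?orbT.
exists C; last by rewrite aC bC cC dC.
split.
- rewrite /is_subpolygon; apply/card_gt2P; exists a, b, c; split; first by split.
  have /and4P [ab ac _ /and3P [bc _ _]] := cdist X.
  by split => //; rewrite eq_sym.
- move=> d0 [x [y [xC yC xy -> Hxy]]].
  have [hz|hz] := boolP [exists z, cyc3 x z y]; last first.
    left; exists x, y; split; rewrite ?inE //.
    by move=> z _; apply/negP => h; move/negP: hz; apply; apply/existsP; exists z.
  right.
  have G : forall v, cyc3 x v y -> exists s t, [set s; t] \in E /\
      (pos x s < pos x v < pos x t)%N && (pos x t <= pos x y)%N.
    move=> v hv.
    have vC : v \notin C by apply/negP => vC; move: (Hxy v vC); rewrite hv.
    case: (Cnot v vC) => w [e [s [t [wW eE es Y]]]].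
    have h1 := Csep x e s t w xC eE es wW.
    have h2 := Csep y e s t w yC eE es wW.
    case/orP: (GG Y h1 h2 hv) => H.
      by exists s, t; rewrite -es.
    by exists t, s; rewrite s2C -es.
  case/existsP: hz => z0 hz0.
  case: (G z0 hz0) => s0 [t0 [E0 H0']].
  pose P := fun st : V * V => ([set st.1; st.2] \in E) && (pos x st.1 < pos x st.2 <= pos x y)%N.
  have P0 : P (s0, t0).
    rewrite /P; apply/andP; split; first exact: E0.
    change (is_true (pos x s0 < pos x t0 <= pos x y)%N). by move: H0'; clear; lia.
  case: (@arg_maxnP _ (s0, t0) P (fun st : V * V => pos x st.2 - pos x st.1) P0) => [[s t]].
  rewrite /P => /andP [Est Hst] Hmax.
  change (is_true ([set s; t] \in E)) in Est. change (is_true (pos x s < pos x t <= pos x y)%N) in Hst.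
  have Hmax' : forall s' t', [set s'; t'] \in E -> (pos x s' < pos x t' <= pos x y)%N ->
      (pos x t' - pos x s' <= pos x t - pos x s)%N.
    move=> s' t' E' H'; apply: (Hmax (s', t')); rewrite /P; apply/andP; split; [exact: E' | exact: H'].
  have NC : forall s' t', [set s'; t'] \in E -> ~~ crossb s t s' t'.
    move=> s' t' E'; apply/negP => Y; apply: (HE _ _ Est E'); exists s, t, s', t'; split => //.
  have ps0 : pos x s = 0.
    apply/eqP; rewrite -leqn0 leqNgt; apply/negP => hs.
    have cs : cyc3 x s y by apply: L3; [exact: hs | move: Hst; clear; lia].
    case: (G s cs) => s' [t' [E' H']].
    have Hst' : (pos x s < pos x t)%N by move: Hst; clear; lia.
    have h := NCP (proj1 (andP H')) Hst' (NC s' t' E').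
    have HM : (pos x t' - pos x s' <= pos x t - pos x s)%N by apply: Hmax' => //; move: H' Hst; clear; lia.
    move: H' Hst h HM; clear; lia.
  have pty : pos x t = pos x y.
    apply/eqP; rewrite eqn_leq; move: (Hst) => /andP [_ ->] /=; rewrite leqNgt; apply/negP => ht.
    have ct : cyc3 x t y by apply: L3; [move: Hst; clear; lia | exact: ht].
    case: (G t ct) => s' [t' [E' H']].
    have Hst' : (pos x s < pos x t)%N by move: Hst; clear; lia.
    have h := NCP2 (proj1 (andP H')) Hst' (NC s' t' E').
    have HM : (pos x t' - pos x s' <= pos x t - pos x s)%N by apply: Hmax' => //; move: H' Hst; clear; lia.
    move: H' Hst h HM; clear; lia.
  have sx : s = x by apply: (pos_inj (x := x)); rewrite ps0 pos_x.
  have ty : t = y by apply: (pos_inj (x := x)).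
  by rewrite -sx -ty.
- move=> e eE [[sub card] nedge]; apply: nedge.
  have /cards2P [s [t [st es]]] : #|e| == 2 by rewrite card.
  have sC : s \in C by apply: (subsetP sub); rewrite es !inE eqxx.
  have tC : t \in C by apply: (subsetP sub); rewrite es !inE eqxx orbT.
  have [hz|hz] := boolP [exists z in C, cyc3 s z t].
    case/existsP: hz => z /andP [zC hz].
    exists t, s; split => //; first by rewrite eq_sym.
      by rewrite es s2C.
    move=> z' z'C; apply/negP => h'.
    by move: (Cgood z z' e s t zC z'C eE es); rewrite (cyc3_cross hz h').
  exists s, t; split => //.
  by move=> z zC; apply/negP => h; move/negP: hz; apply; apply/existsP; exists z; rewrite zC.
Qed.

End Cell.

Lemma diag2 n (C : {set 'I_n}) (x y : 'I_n) : x \in C -> y \in C -> (x:nat) != y -> is_diag C [set x; y].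
Proof.
move=> xC yC xy; split; last by rewrite cards2 xy.
by apply/subsetP => z; rewrite !inE => /orP [] /eqP ->.
Qed.

Lemma pt_transfer (K : semifield) n (C : {set 'I_n}) (f g : {set 'I_n} -> K) a b c d :
  (forall x y, x \in C -> y \in C -> (x:nat) != y -> f [set x; y] = g [set x; y]) ->
  a \in C -> b \in C -> c \in C -> d \in C -> crossb a b c d ->
  ptolemy f a b c d -> ptolemy g a b c d.
Proof.
move=> E aC bC cC dC X.
have /and4P [ab ac ad /and3P [bc bd cd]] := cdist X.
rewrite /ptolemy (E a b) // (E c d) // (E a c) // (E b d) // (E a d) // (E b c) //.
Qed.

Theorem theoremC (K : semifield) (n : nat) (E : {set {set 'I_n}})
    (Dc : {set 'I_n} -> {set {set 'I_n}}) (fc : {set 'I_n} -> {set 'I_n} -> K)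
    (D : {set {set 'I_n}}) (f : {set 'I_n} -> K) :
  (3 <= n)%N ->
  dissection setT E ->
  (forall C, is_cell E C -> dissection C (Dc C)) ->
  (forall C, is_cell E C -> weak_frieze C (Dc C) (fc C)) ->
  (forall C1 C2 d, is_cell E C1 -> is_cell E C2 ->
     is_diag C1 d -> is_diag C2 d -> fc C1 d = fc C2 d) ->
  (forall d, d \in D <-> d \in E \/ exists2 C, is_cell E C & d \in Dc C) ->
  weak_frieze setT D f ->
  (forall C d, is_cell E C -> is_diag C d -> f d = fc C d) ->
  (frieze setT f <-> forall C, is_cell E C -> frieze C (fc C)).
Proof.
move=> _ HE _ _ _ HD Hw Hf.
split.
  move=> Hfr C HC a b c d aC bC cC dC X.
  apply: (@pt_transfer K n C f (fc C)) => //.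
    by move=> x y xC yC xy; apply: Hf => //; apply: diag2.
  by apply: Hfr; rewrite ?inE.
move=> Hc.
have HED : forall e, e \in E -> e \in D by move=> e eE; apply/HD; left.
apply: (main_ind HE HED Hw).
move=> S H0 a b c d aS bS cS dS X.
case: (cell_exists HE H0 aS bS cS dS X) => C HC /and4P [aC bC cC dC].
apply: (@pt_transfer K n C (fc C) f) => //.
  by move=> x y xC yC xy; symmetry; apply: Hf => //; apply: diag2.
exact: (Hc C HC).
Qed.
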